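(* Let $\Sigma$ be any set of $\mathscr{L}$-sentences. Define, for every purely modal formula $K\phi$ and every assignment $s$ into $\mathbb{N}$, $K\phi$ to be true at $s$ iff $\Sigma\models\phi^s$. Then this assignment of truth values satisfies the three constraints (a), (b), (c) in the definition of an $\mathscr{L}$-structure; consequently $\mathcal{M}_\Sigma$ (the standard model of arithmetic on $\mathbb{N}$ equipped with this interpretation of $K$) is an $\mathscr{L}$-structure.
   Context: $\mathscr{L}$ is the language of Peano arithmetic (variables, constant $0$, unary $S$, binary $+$, $\cdot$) extended by a unary modal operator $K$: whenever $\phi$ is a formula, $K\phi$ is a formula (called purely modal). Free variables, sentences, substitutability and substitution $\phi(x|t)$ are defined as usual. For a set $U$, an assignment into $U$ maps variables to $U$; $s(x|u)$ agrees with $s$ except mapping $x$ to $u$. An $\mathscr{L}$-structure $\mathcal{M}$ consists of a first-order structure for the arithmetic part together with a function assigning to each assignment $s$ and each purely modal formula $K\phi$ a truth value (written $\mathcal{M}\models K\phi[s]$ or not), subject to: (a) whether $\mathcal{M}\models K\phi[s]$ does not depend on $s(x)$ for $x$ not free in $\phi$; (b) if $\psi$ is an alphabetic variant of $\phi$ (obtained by renaming bound variables respecting binding), then $\mathcal{M}\models K\phi[s]$ iff $\mathcal{M}\models K\psi[s]$; (c) if $y$ is substitutable for $x$ in $\phi$, then $\mathcal{M}\models K\phi(x|y)[s]$ iff $\mathcal{M}\models K\phi[s(x|s(y))]$. Satisfaction $\mathcal{M}\models\phi[s]$ for all formulas is then defined inductively as usual; $\mathcal{M}\models\phi$ means $\mathcal{M}\models\phi[s]$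 for all $s$. For a set $\Sigma$ of sentences, $\Sigma\models\phi$ means every $\mathscr{L}$-structure satisfying every member of $\Sigma$ satisfies $\phi$. For a formula $\phi$ and an assignment $s$ into $\mathbb{N}$, $\phi^s$ is the sentence obtained by replacing each free variable $x$ of $\phi$ by the numeral $\overline{s(x)}$ (i.e. $S(S(\cdots S(0)))$ with $s(x)$ occurrences of $S$). *)

(* Defs.v *)
From Stdlib Require Import Arith List.

Inductive term : Type :=
| Var  : nat -> term
| Zero : term
| Succ : term -> term
| Plus : term -> term -> term
| Mult : term -> term -> term.

Inductive formula : Type :=
| Eq  : term -> term -> formula
| Neg : formula -> formula
| Imp : formula -> formula -> formula
| All : nat -> formula -> formula
| K   : formula -> formula.

Fixpoint occurs (x : nat) (t : term) : Prop :=
  match t with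
  | Var y => x = y
  | Zero => False
  | Succ t1 => occurs x t1
  | Plus t1 t2 | Mult t1 t2 => occurs x t1 \/ occurs x t2
  end.

Fixpoint free (x : nat) (phi : formula) : Prop :=
  match phi with
  | Eq t1 t2 => occurs x t1 \/ occurs x t2
  | Neg p => free x p
  | Imp p q => free x p \/ free x q
  | All y p => x <> y /\ free x p
  | K p => free x p
  end.

Definition sentence (phi : formula) : Prop := forall x, ~ free x phi.

Fixpoint tsubst (x : nat) (u : term) (t : term) : term :=
  match t with
  | Var y => if Nat.eqb x y then u else Var y
  | Zero => Zero
  | Succ t1 => Succ (tsubst x u t1)
  | Plus t1 t2 => Plus (tsubst x u t1) (tsubst x u t2)
  | Mult t1 t2 => Mult (tsubst x u t1) (tsubst x u t2)
  end.

Fixpoint subst (x : nat) (u : term) (phi : formula) : formula :=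
  match phi with
  | Eq t1 t2 => Eq (tsubst x u t1) (tsubst x u t2)
  | Neg p => Neg (subst x u p)
  | Imp p q => Imp (subst x u p) (subst x u q)
  | All y p => if Nat.eqb x y then All y p else All y (subst x u p)
  | K p => K (subst x u p)
  end.

Fixpoint substitutable (u : term) (x : nat) (phi : formula) : Prop :=
  match phi with
  | Eq _ _ => True
  | Neg p => substitutable u x p
  | Imp p q => substitutable u x p /\ substitutable u x q
  | All y p => ~ free x (All y p) \/ (~ occurs y u /\ substitutable u x p)
  | K p => substitutable u x p
  end.

(* Alphabetic variants (alpha-equivalence: renaming of bound variables
   respecting binding), via a list of paired bound variables. *)
Fixpoint var_rel (l : list (nat * nat)) (x y : nat) : Prop :=
  match l with
  | nil => x = y
  | (a, b) :: l' => (x = a /\ y = b) \/ (x <> a /\ y <> b /\ var_rel l' x y)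
  end.

Fixpoint term_rel (l : list (nat * nat)) (t1 t2 : term) : Prop :=
  match t1, t2 with
  | Var x, Var y => var_rel l x y
  | Zero, Zero => True
  | Succ a, Succ b => term_rel l a b
  | Plus a1 a2, Plus b1 b2 => term_rel l a1 b1 /\ term_rel l a2 b2
  | Mult a1 a2, Mult b1 b2 => term_rel l a1 b1 /\ term_rel l a2 b2
  | _, _ => False
  end.

Fixpoint alpha_rel (l : list (nat * nat)) (phi psi : formula) : Prop :=
  match phi, psi with
  | Eq a1 a2, Eq b1 b2 => term_rel l a1 b1 /\ term_rel l a2 b2
  | Neg p, Neg q => alpha_rel l p q
  | Imp p1 p2, Imp q1 q2 => alpha_rel l p1 q1 /\ alpha_rel l p2 q2
  | All x p, All y q => alpha_rel ((x, y) :: l) p q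
  | K p, K q => alpha_rel l p q
  | _, _ => False
  end.

Definition alpha_variant (phi psi : formula) : Prop := alpha_rel nil phi psi.

(* Pre-structures: an arithmetic first-order structure together with an
   arbitrary truth value for each purely modal formula K phi at each
   assignment s ; Kint s phi means  M |= K phi [s]. *)
Record prestructure : Type := {
  carrier : Type;
  zero : carrier;
  succ : carrier -> carrier;
  plus : carrier -> carrier -> carrier;
  mult : carrier -> carrier -> carrier;
  Kint : (nat -> carrier) -> formula -> Prop
}.

Definition upd {U : Type} (s : nat -> U) (x : nat) (u : U) : nat -> U :=
  fun y => if Nat.eqb y x then u else s y.

Fixpoint eval (M : prestructure) (s : nat -> carrier M) (t : term) : carrier M :=
  match t with
  | Var x => s x
  | Zero => zero M
  | Succ t1 => succ M (eval M s t1)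
  | Plus t1 t2 => plus M (eval M s t1) (eval M s t2)
  | Mult t1 t2 => mult M (eval M s t1) (eval M s t2)
  end.

Definition constraint_a (M : prestructure) : Prop :=
  forall (phi : formula) (s s' : nat -> carrier M),
    (forall x, free x phi -> s x = s' x) -> (Kint M s phi <-> Kint M s' phi).

Definition constraint_b (M : prestructure) : Prop :=
  forall (phi psi : formula) (s : nat -> carrier M),
    alpha_variant phi psi -> (Kint M s phi <-> Kint M s psi).

Definition constraint_c (M : prestructure) : Prop :=
  forall (phi : formula) (x y : nat) (s : nat -> carrier M),
    substitutable (Var y) x phi ->
    (Kint M s (subst x (Var y) phi) <-> Kint M (upd s x (s y)) phi).

Definition is_structure (M : prestructure) : Prop :=
  constraint_a M /\ constraint_b M /\ constraint_c M.

Fixpoint sat (M : prestructure) (s : nat -> carrier M) (phi : formula) : Prop :=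
  match phi with
  | Eq t1 t2 => eval M s t1 = eval M s t2
  | Neg p => ~ sat M s p
  | Imp p q => sat M s p -> sat M s q
  | All x p => forall u : carrier M, sat M (upd s x u) p
  | K p => Kint M s p
  end.

Definition models (M : prestructure) (phi : formula) : Prop :=
  forall s : nat -> carrier M, sat M s phi.

Definition entails (Sigma : formula -> Prop) (phi : formula) : Prop :=
  forall M : prestructure, is_structure M ->
    (forall sigma, Sigma sigma -> models M sigma) -> models M phi.

Fixpoint numeral (n : nat) : term :=
  match n with
  | O => Zero
  | S m => Succ (numeral m)
  end.

Fixpoint tssubst (rho : nat -> term) (t : term) : term :=
  match t with
  | Var y => rho y
  | Zero => Zero
  | Succ t1 => Succ (tssubst rho t1)
  | Plus t1 t2 => Plus (tssubst rho t1) (tssubst rho t2)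
  | Mult t1 t2 => Mult (tssubst rho t1) (tssubst rho t2)
  end.

Fixpoint ssubst (rho : nat -> term) (phi : formula) : formula :=
  match phi with
  | Eq t1 t2 => Eq (tssubst rho t1) (tssubst rho t2)
  | Neg p => Neg (ssubst rho p)
  | Imp p q => Imp (ssubst rho p) (ssubst rho q)
  | All x p => All x (ssubst (fun y => if Nat.eqb y x then Var y else rho y) p)
  | K p => K (ssubst rho p)
  end.

(* phi^s : each free variable x replaced by the numeral of s(x) *)
Definition close (phi : formula) (s : nat -> nat) : formula :=
  ssubst (fun x => numeral (s x)) phi.

Definition M_Sigma (Sigma : formula -> Prop) : prestructure := {|
  carrier := nat;
  zero := 0;
  succ := S;
  plus := Nat.add;
  mult := Nat.mul;
  Kint := fun s phi => entails Sigma (close phi s)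
|}.

(* Main.v *)
Require Import Defs.
From Stdlib Require Import Arith List Lia FunctionalExtensionality.
Import ListNotations.

Fixpoint tmv t := match t with Var v => v | Zero => 0 | Succ a => tmv a
 | Plus a b | Mult a b => max (tmv a) (tmv b) end.
Fixpoint mv p := match p with Eq a b => max (tmv a) (tmv b) | Neg p => mv p
 | Imp p q => max (mv p) (mv q) | All y p => max y (mv p) | K p => mv p end.
Fixpoint fresh_in z p : Prop := match p with
 | Eq a b => ~ occurs z a /\ ~ occurs z b | Neg p => fresh_in z p
 | Imp p q => fresh_in z p /\ fresh_in z q | All y p => y <> z /\ fresh_in z p
 | K p => fresh_in z p end.
Fixpoint size p := match p with Eq _ _ => 0 | Neg p => S (size p)
 | Imp p q => S (size p + size q) | All _ p => S (size p) | K p => S (size p) end.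

Lemma tmv_fresh t z : tmv t < z -> ~ occurs z t.
Proof. induction t; simpl; intros; try tauto; try lia; try (apply IHt; lia);
  intros [?|?]; [apply IHt1|apply IHt2|apply IHt1|apply IHt2]; auto; lia. Qed.

Lemma mv_fresh p z : mv p < z -> fresh_in z p.
Proof. induction p; simpl; intros; repeat split; try (apply tmv_fresh; lia);
  try (apply IHp; lia); try (apply IHp1; lia); try (apply IHp2; lia); lia. Qed.

Lemma fresh_notfree z p : fresh_in z p -> ~ free z p.
Proof. induction p; simpl; tauto. Qed.

Lemma fresh_substitutable z x p : fresh_in z p -> substitutable (Var z) x p.
Proof. induction p; simpl; intuition. Qed.

Lemma tsubst_nofree x u t : ~ occurs x t -> tsubst x u t = t.
Proof. induction t; simpl; intros; try f_equal; try tauto.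
  destruct (Nat.eqb_spec x n); tauto. Qed.

Lemma subst_nofree x u p : ~ free x p -> subst x u p = p.
Proof. induction p; simpl; intros; try f_equal; try rewrite !tsubst_nofree; try tauto.
  destruct (Nat.eqb_spec x n); auto. rewrite IHp; tauto. Qed.

Lemma size_subst x u p : size (subst x u p) = size p.
Proof. induction p; simpl; auto. destruct (x =? n); simpl; auto. Qed.

Lemma ssubst_ext p : forall r r', (forall x, free x p -> r x = r' x) -> ssubst r p = ssubst r' p.
Proof.
  induction p; simpl; intros r r' H; try (f_equal; auto; fail).
  - assert (Ht: forall t, (forall x, occurs x t -> r x = r' x) -> tssubst r t = tssubst r' t).
    { induction t1; simpl; intros; f_equal; auto. }
    f_equal; apply Ht; auto.
  - f_equal; apply IHp; intros v Hv. destruct (Nat.eqb_spec v n); auto.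
Qed.

Lemma tss_subst x y r r' t : r' x = r y -> (forall v, v <> x -> occurs v t -> r' v = r v) ->
  tssubst r (tsubst x (Var y) t) = tssubst r' t.
Proof. induction t; simpl; intros; try (f_equal; auto; fail).
  destruct (Nat.eqb_spec x n); simpl; subst; auto. symmetry; auto. Qed.

Lemma ss_subst p : forall x y r r', substitutable (Var y) x p -> r' x = r y ->
  (forall v, v <> x -> free v p -> r' v = r v) ->
  ssubst r (subst x (Var y) p) = ssubst r' p.
Proof.
  induction p; simpl; intros x y r r' Hs H1 H2; try (f_equal; eauto; fail).
  - f_equal; apply tss_subst; auto.
  - f_equal; [eapply IHp1|eapply IHp2]; eauto; tauto.
  - destruct (Nat.eqb_spec x n).
    + subst; simpl. f_equal. apply ssubst_ext. intros v Hv.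
      destruct (Nat.eqb_spec v n); auto. symmetry; auto.
    + simpl; f_equal. destruct Hs as [Hs|[Hy Hs]].
      * rewrite subst_nofree by tauto. apply ssubst_ext. intros v Hv.
        destruct (Nat.eqb_spec v n); auto. symmetry; apply H2; auto.
        intro; subst; tauto.
      * apply IHp; auto.
        -- destruct (Nat.eqb_spec x n); try contradiction.
           destruct (Nat.eqb_spec y n); auto. simpl in Hy; congruence.
        -- intros v Hv Hf. destruct (Nat.eqb_spec v n); auto.
Qed.

Lemma eval_ext M t t' e : (forall x, occurs x e -> t x = t' x) -> eval M t e = eval M t' e.
Proof. induction e; simpl; intros; f_equal; auto. Qed.

Lemma sat_CL M (HM : is_structure M) p : forall t t', (forall x, free x p -> t x = t' x) ->
  (sat M t p <-> sat M t' p).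
Proof.
  induction p as [e1 e2|p IHp|p1 IHp1 p2 IHp2|n p IHp|p IHp]; simpl; intros t t' H.
  - rewrite (eval_ext M t t' e1), (eval_ext M t t' e2); auto; tauto.
  - rewrite (IHp t t'); auto; tauto.
  - rewrite (IHp1 t t'), (IHp2 t t'); auto; tauto.
  - split; intros Hu u; [rewrite <- (IHp (upd t n u))|rewrite (IHp (upd t n u))]; eauto;
      intros v Hv; unfold upd; destruct (Nat.eqb_spec v n); auto.
  - apply (proj1 HM); auto.
Qed.

Lemma sat_ext M (HM : is_structure M) p t t' : (forall x, t x = t' x) -> (sat M t p <-> sat M t' p).
Proof. intros; apply sat_CL; auto. Qed.

Lemma eval_subst M t x z e : eval M t (tsubst x (Var z) e) = eval M (upd t x (t z)) e.
Proof. induction e; simpl; try congruence. unfold upd.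
  rewrite Nat.eqb_sym. destruct (n =? x); auto. Qed.

Lemma sat_SL M (HM : is_structure M) p : forall t x z, substitutable (Var z) x p ->
  (sat M t (subst x (Var z) p) <-> sat M (upd t x (t z)) p).
Proof.
  induction p as [e1 e2|p IHp|p1 IHp1 p2 IHp2|n p IHp|p IHp]; simpl; intros t x z Hs.
  - rewrite !eval_subst; tauto.
  - rewrite IHp; auto; tauto.
  - rewrite IHp1, IHp2; tauto.
  - destruct (Nat.eqb_spec x n).
    + subst. simpl. split; intros Hu u; specialize (Hu u); revert Hu; apply sat_ext; auto;
      intro v; unfold upd; destruct (v =? n); auto.
    + simpl. destruct Hs as [Hs|[Hy Hs]].
      * rewrite subst_nofree by tauto. split; intros Hu u; specialize (Hu u); revert Hu;
        apply sat_CL; auto; intros v Hv; unfold upd; destruct (Nat.eqb_spec v n); auto;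
        destruct (Nat.eqb_spec v x); subst; tauto.
      * simpl in Hy. split; intros Hu u; specialize (Hu u);
        [rewrite IHp in Hu|rewrite IHp]; auto; revert Hu; apply sat_ext; auto;
        intro v; unfold upd; destruct (Nat.eqb_spec z n); try congruence;
        destruct (Nat.eqb_spec v n), (Nat.eqb_spec v x); subst; congruence.
  - apply (proj2 (proj2 HM)); auto.
Qed.

Definition inl_ (x : nat) (m : list (nat*nat)) := existsb (fun c => Nat.eqb x (fst c)) m.
Definition inr_ (x : nat) (m : list (nat*nat)) := existsb (fun c => Nat.eqb x (snd c)) m.
Definition mcond (z : nat) (m : list (nat*nat)) := forall c d, In (c,d) m -> c <> z /\ d <> z.

Lemma VG x y z m : forall a b, var_rel (m ++ [(x,y)]) a b -> a <> z -> b <> z -> mcond z m ->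
  var_rel (m ++ [(z,z)]) (if inl_ x m then a else if x =? a then z else a)
                         (if inr_ y m then b else if y =? b then z else b).
Proof.
  induction m as [|[c d] m IH]; simpl; intros a b H Ha Hb Hm.
  - destruct H as [[E1 E2]|[? [? E]]].
    + subst a b; rewrite !Nat.eqb_refl; auto.
    + subst a. destruct (Nat.eqb_spec x b), (Nat.eqb_spec y b); try congruence. right; auto.
  - assert (Hc: c <> z /\ d <> z) by (apply Hm; left; auto).
    assert (Hm': mcond z m) by (intros c' d' Hi; apply Hm; right; auto).
    destruct H as [[E1 E2]|[? [? H]]].
    + subst a b. left. destruct (Nat.eqb_spec x c) as [Ex|Ex], (Nat.eqb_spec y d) as [Ey|Ey]; simpl;
      destruct (inl_ x m), (inr_ y m); auto;
      destruct (Nat.eqb_spec x c), (Nat.eqb_spec y d); try congruence; auto.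
    + right. specialize (IH a b H Ha Hb Hm').
      destruct (Nat.eqb_spec x c), (Nat.eqb_spec y d); simpl;
      destruct (inl_ x m), (inr_ y m) in *;
      destruct (Nat.eqb_spec x a), (Nat.eqb_spec y b) in *; try congruence;
      repeat split; try congruence; intuition.
Qed.

Lemma TG x y z m : forall t1 t2, term_rel (m ++ [(x,y)]) t1 t2 -> ~ occurs z t1 -> ~ occurs z t2 -> mcond z m ->
  term_rel (m ++ [(z,z)]) (if inl_ x m then t1 else tsubst x (Var z) t1)
                          (if inr_ y m then t2 else tsubst y (Var z) t2).
Proof.
  induction t1 as [n| |t1 IHt1|t1_1 IHt1_1 t1_2 IHt1_2|t1_1 IHt1_1 t1_2 IHt1_2];
  destruct t2 as [n0| |t2|t2_1 t2_2|t2_1 t2_2]; simpl; intros H H1 H2 Hm; try contradiction;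
  try (destruct (inl_ x m), (inr_ y m); simpl; auto; fail).
  - pose proof (VG x y z m n n0 H (fun e => H1 (eq_sym e)) (fun e => H2 (eq_sym e)) Hm).
    destruct (inl_ x m), (inr_ y m); simpl in *; auto;
    destruct (x =? n), (y =? n0); simpl; auto.
  - destruct H. specialize (IHt1_1 t2_1); specialize (IHt1_2 t2_2).
    destruct (inl_ x m), (inr_ y m); simpl in *; split; tauto.
  - destruct H. specialize (IHt1_1 t2_1); specialize (IHt1_2 t2_2).
    destruct (inl_ x m), (inr_ y m); simpl in *; split; tauto.
Qed.

Lemma G x y z p : forall q m, alpha_rel (m ++ [(x,y)]) p q -> fresh_in z p -> fresh_in z q -> mcond z m ->
  alpha_rel (m ++ [(z,z)]) (if inl_ x m then p else subst x (Var z) p)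
                          (if inr_ y m then q else subst y (Var z) q).
Proof.
  induction p as [e1 e2|p IHp|p1 IHp1 p2 IHp2|n p IHp|p IHp];
   destruct q as [f1 f2|q|q1 q2|n' q|q]; simpl; intros m H H1 H2 Hm; try contradiction;
   try (destruct (inl_ x m), (inr_ y m); simpl; auto; fail).
  - destruct H. pose proof (TG x y z m e1 f1) as T1. pose proof (TG x y z m e2 f2) as T2.
    destruct (inl_ x m), (inr_ y m); simpl in *; split; tauto.
  - specialize (IHp q m H H1 H2 Hm). destruct (inl_ x m), (inr_ y m); simpl in *; auto.
  - destruct H. specialize (IHp1 q1 m); specialize (IHp2 q2 m).
    destruct (inl_ x m), (inr_ y m); simpl in *; split; tauto.
  - destruct H1 as [Hn H1], H2 as [Hn' H2].
    assert (Hm' : mcond z ((n,n')::m)) by (intros c d [E|Hi]; [inversion E; subst; auto|auto]).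
    specialize (IHp q ((n,n')::m) H H1 H2 Hm'). simpl in IHp.
    unfold inl_, inr_ in *. simpl in IHp.
    destruct (existsb (fun c => x =? fst c) m), (existsb (fun c => y =? snd c) m);
    destruct (Nat.eqb_spec x n), (Nat.eqb_spec y n'); simpl in *; auto.
  - specialize (IHp q m H H1 H2 Hm). destruct (inl_ x m), (inr_ y m); simpl in *; auto.
Qed.

Lemma alpha_mono p : forall q l1 l2, alpha_rel l1 p q -> (forall a b, var_rel l1 a b -> var_rel l2 a b) ->
  alpha_rel l2 p q.
Proof.
  assert (Ht: forall t1 t2 l1 l2, term_rel l1 t1 t2 -> (forall a b, var_rel l1 a b -> var_rel l2 a b) ->
    term_rel l2 t1 t2).
  { induction t1; destruct t2; simpl; intros; try tauto; eauto; intuition eauto. }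
  induction p; destruct q; simpl; intros l1 l2 H Hv; try contradiction; intuition eauto.
  eapply IHp; eauto. simpl. intros a b [E|[? [? E]]]; auto.
Qed.

Lemma term_rel_nil t1 : forall t2, term_rel nil t1 t2 -> t1 = t2.
Proof. induction t1; destruct t2; simpl; intros; try contradiction; f_equal; intuition. Qed.

Lemma AS M (HM : is_structure M) n : forall p q t, size p <= n -> alpha_rel nil p q ->
  (sat M t p <-> sat M t q).
Proof.
  induction n; intros p q t Hs H;
  destruct p as [e1 e2|p|p1 p2|x p|p]; destruct q as [f1 f2|q|q1 q2|y q|q];
  simpl in *; try contradiction; try lia.
  - destruct H as [E1 E2]; apply term_rel_nil in E1, E2; subst; tauto.
  - destruct H as [E1 E2]; apply term_rel_nil in E1, E2; subst; tauto.
  - rewrite (IHn p q t); tauto || lia.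
  - destruct H. rewrite (IHn p1 q1 t), (IHn p2 q2 t); tauto || lia.
  - set (z := S (max (mv p) (mv q))).
    assert (Fp : fresh_in z p) by (apply mv_fresh; unfold z; lia).
    assert (Fq : fresh_in z q) by (apply mv_fresh; unfold z; lia).
    assert (Hz : forall x p u t, fresh_in z p ->
       (sat M (upd t x u) p <-> sat M (upd t z u) (subst x (Var z) p))).
    { intros x' p' u t' F. rewrite sat_SL by auto using fresh_substitutable.
      apply sat_CL; auto. intros v Hv. unfold upd.
      assert (v <> z) by (intro E; rewrite E in Hv; apply (fresh_notfree _ _ F Hv)).
      rewrite Nat.eqb_refl. destruct (Nat.eqb_spec v x'); auto.
      destruct (Nat.eqb_spec v z); congruence. }
    assert (Ha : alpha_rel nil (subst x (Var z) p) (subst y (Var z) q)).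
    { assert (Hm0 : mcond z nil) by (intros c d []).
      pose proof (G x y z p q nil H Fp Fq Hm0) as HG. simpl in HG.
      eapply alpha_mono. apply HG. simpl. intros a b [[E1 E2]|[_ [_ E]]]; congruence. }
    assert (Hs' : size (subst x (Var z) p) <= n) by (rewrite size_subst; lia).
    split; intros Hu u; specialize (Hu u).
    + rewrite Hz in Hu by exact Fp. rewrite Hz by exact Fq.
      apply (IHn _ _ _ Hs' Ha); auto.
    + rewrite Hz in Hu by exact Fq. rewrite Hz by exact Fp.
      apply (IHn _ _ _ Hs' Ha); auto.
  - apply (proj1 (proj2 HM)); auto.
Qed.

Definition rhocond l (r1 r2 : nat -> term) := forall a b, var_rel l a b ->
  (r1 a = Var a /\ r2 b = Var b) \/ (exists n, r1 a = numeral n /\ r2 b = numeral n).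

Lemma numeral_rel l n : term_rel l (numeral n) (numeral n).
Proof. induction n; simpl; auto. Qed.

Lemma CB p : forall q l r1 r2, alpha_rel l p q -> rhocond l r1 r2 ->
  alpha_rel l (ssubst r1 p) (ssubst r2 q).
Proof.
  assert (Ht : forall t1 t2 l r1 r2, term_rel l t1 t2 -> rhocond l r1 r2 ->
     term_rel l (tssubst r1 t1) (tssubst r2 t2)).
  { induction t1; destruct t2; simpl; intros; try contradiction; intuition eauto.
    destruct (H0 n n0 H) as [[-> ->]|[k [-> ->]]]; simpl; auto using numeral_rel. }
  induction p; destruct q; simpl; intros l r1 r2 H Hr; try contradiction; intuition eauto.
  apply IHp; auto. intros a b [[-> ->]|[Ha [Hb E]]].
  - left. rewrite !Nat.eqb_refl; auto.
  - apply Nat.eqb_neq in Ha, Hb. rewrite Ha, Hb. auto.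
Qed.

Theorem lemma8 (Sigma : formula -> Prop)
  (HSigma : forall sigma, Sigma sigma -> sentence sigma) :
  constraint_a (M_Sigma Sigma) /\ constraint_b (M_Sigma Sigma) /\
  constraint_c (M_Sigma Sigma) /\ is_structure (M_Sigma Sigma).
Proof.
  assert (Ca : constraint_a (M_Sigma Sigma)).
  { intros phi s s' H; simpl. unfold close. rewrite (ssubst_ext phi _ (fun x => numeral (s' x))).
    - tauto.
    - intros x Hx; rewrite H; auto. }
  assert (Cb : constraint_b (M_Sigma Sigma)).
  { intros phi psi s H; simpl.
    assert (Hc : alpha_rel nil (close phi s) (close psi s)).
    { apply CB; auto. intros a b E; simpl in E; subst; right; eauto. }
    unfold entails, models; split; intros He M HM HS t;
     [apply (AS M HM _ _ _ t (le_n _) Hc)|apply (AS M HM _ _ _ t (le_n _) Hc)]; apply He; auto. }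
  assert (Cc : constraint_c (M_Sigma Sigma)).
  { intros phi x y s H; simpl. unfold close.
    rewrite (ss_subst phi x y _ (fun v => numeral (upd s x (s y) v))); try tauto.
    - unfold upd; rewrite Nat.eqb_refl; auto.
    - intros v Hv _; unfold upd. apply Nat.eqb_neq in Hv; rewrite Hv; auto. }
  unfold is_structure; tauto.
Qed.
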